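(* Let $X$ be a pointed fibrant space over $B$ with section $s_X:B\to X$. Then $\mathrm{cat}^*_B(X)=\mathrm{secat}(s_X)$.
   Context: A fibrewise space over $B$ is a space $X$ with a map $p_X:X\to B$; a fibrewise pointed space is one with a section $s_X:B\to X$ of $p_X$. It is a pointed fibrant space over $B$ if moreover $p_X$ is a Hurewicz fibration. A fibrewise homotopy is a homotopy $H:U\times[0,1]\to X$ with $p_X(H(u,t))=p_U(u)$ for all $t$; write $\simeq_B$. $\mathrm{cat}^*_B(X)$ (fibrewise unpointed LS category): least $n$ such that $X$ is covered by $n+1$ open sets $U_i$ with the inclusion $U_i\hookrightarrow X$ fibrewise homotopic to $s_X\circ p_X|_{U_i}$ ($\infty$ if none). $\mathrm{secat}(g)$ for a map $g:Y\to Z$: least $n$ such that $Z$ is covered by $n+1$ open sets $U$ each admitting a map $s:U\to Y$ with $g\circ s$ homotopic to the inclusion $U\hookrightarrow Z$ ($\infty$ if none). *)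

(* Defs.v *)
From HB Require Import structures.
From mathcomp Require Import all_boot all_order all_algebra.
From mathcomp Require Import all_classical all_reals topology.
From mathcomp Require Import Rstruct Rstruct_topology.
From Stdlib Require Import Rdefinitions.
Set Implicit Arguments. Unset Strict Implicit. Unset Printing Implicit Defensive.
Import Order.TTheory GRing.Theory Num.Theory.
Local Open Scope classical_set_scope.
Local Open Scope ring_scope.

Definition unitI : set R := `[0%R, 1%R].

(* least n such that P n holds, or None (= infinity) if there is none *)
Definition least_or_inf (P : nat -> Prop) : option nat :=
  match pselect (exists n, P n) with
  | left h =>
      Some (@ex_minn (fun n => `[< P n >])
              (let: ex_intro n Pn := h in ex_intro _ n (asboolT Pn)))
  | right _ => None
  end.

Section Fibrewise.
Context {X B : topologicalType}.

Definition homotopy_on {Z : topologicalType} (U : set Z) (f g : Z -> X)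
    (H : Z * R -> X) : Prop :=
  {within U `*` unitI, continuous H} /\
  (forall u, U u -> H (u, 0%R) = f u /\ H (u, 1%R) = g u).

Definition fw_homotopic_on (pX : X -> B) (U : set X) (f g : X -> X) : Prop :=
  exists H : X * R -> X, homotopy_on U f g H /\
    (forall u t, U u -> unitI t -> pX (H (u, t)) = pX u).

Definition hurewicz_fibration (p : X -> B) : Prop :=
  forall (Y : topologicalType) (f : Y -> X) (G : Y * R -> B),
    continuous f -> {within setT `*` unitI, continuous G} ->
    (forall y, G (y, 0%R) = p (f y)) ->
    exists Ht : Y * R -> X,
      {within setT `*` unitI, continuous Ht} /\
      (forall y, Ht (y, 0%R) = f y) /\
      (forall y t, unitI t -> p (Ht (y, t)) = G (y, t)).

Definition pointed_fibrant (pX : X -> B) (sX : B -> X) : Prop :=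
  continuous pX /\ continuous sX /\ (forall b, pX (sX b) = b) /\
  hurewicz_fibration pX.

Definition open_cover_by {Z : topologicalType} (n : nat) (P : set Z -> Prop) : Prop :=
  exists U : 'I_n.+1 -> set Z,
    (forall i, open (U i)) /\ (forall i, P (U i)) /\
    (forall x, exists i, U i x).

(* fibrewise unpointed LS category; None = infinity *)
Definition catB (pX : X -> B) (sX : B -> X) : option nat :=
  least_or_inf (fun n => open_cover_by n
    (fun U => fw_homotopic_on pX U id (sX \o pX))).

End Fibrewise.

Definition secat {Y Z : topologicalType} (g : Y -> Z) : option nat :=
  least_or_inf (fun n => open_cover_by n
    (fun U : set Z => exists s : Z -> Y, {within U, continuous s} /\
        exists H : Z * R -> Z, homotopy_on U (g \o s) id H)).

(* Main.v *)
Require Import Defs.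
From mathcomp Require Import all_boot all_order all_algebra all_classical all_reals topology normedtype.
From mathcomp Require Import Rstruct Rstruct_topology lra.
Local Notation R := Rdefinitions.R.
Set Implicit Arguments. Unset Strict Implicit. Unset Printing Implicit Defensive.
Import Order.TTheory GRing.Theory Num.Theory.
Local Open Scope classical_set_scope.
Local Open Scope ring_scope.

Lemma within_comp {S T Z : topologicalType} (A : set S) (B : set T) (g : S -> T) (f : T -> Z) :
  (forall x, A x -> B (g x)) -> {within A, continuous g} -> {within B, continuous f} ->
  {within A, continuous (f \o g)}.
Proof.
move=> AB /subspace_continuousP cg /subspace_continuousP cf.
apply/subspace_continuousP => x Ax W hW.
have h1 := cf _ (AB _ Ax) _ hW.
have := cg x Ax _ h1.
rewrite !nbhs_simpl /= /within.
rewrite /= /prop_near1 /=. apply: filterS => y H Ay; exact: H Ay (AB _ Ay).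
Qed.

Lemma within_paste {T Z : topologicalType} (S C1 C2 : set T) (f : T -> Z) :
  closed C1 -> closed C2 -> S `<=` C1 `|` C2 ->
  {within S `&` C1, continuous f} -> {within S `&` C2, continuous f} ->
  {within S, continuous f}.
Proof.
move=> cC1 cC2 SC ctsA ctsB; apply/continuous_closedP => W oW.
case/continuous_closedP/(_ _ oW)/closed_subspaceP: ctsA => V1 cV1 V1W.
case/continuous_closedP/(_ _ oW)/closed_subspaceP: ctsB => V2 cV2 V2W.
apply/closed_subspaceP; exists ((V1 `&` C1) `|` (V2 `&` C2)).
  by apply: closedU; exact: closedI.
rewrite eqEsubset; split=> t.
  case=> -[[V1t C1t]|[V2t C2t]] St.
    have : (V1 `&` (S `&` C1)) t by [].
    by rewrite V1W => -[].
  have : (V2 `&` (S `&` C2)) t by [].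
  by rewrite V2W => -[].
case=> Wt St; split=> //; case: (SC t St) => Ct; [left|right]; split => //.
  have : ((from_subspace (S `&` C1) f @^-1` W) `&` (S `&` C1)) t by [].
  by rewrite -V1W => -[].
have : ((from_subspace (S `&` C2) f @^-1` W) `&` (S `&` C2)) t by [].
by rewrite -V2W => -[].
Qed.

Lemma subP_within {T Z : topologicalType} (A : set T) (F : T * R -> Z) :
  continuous (from_subspace ((setT : set (subspace A)) `*` unitI) F) ->
  {within A `*` unitI, continuous F}.
Proof.
move=> /subspace_continuousP cF; apply/subspace_continuousP => -[y r] [/= Ay Ir] W hW.
have := cF (y, r) (conj I Ir) W hW.
rewrite !nbhs_simpl /= /within /prop_near1 /= !nbhs_simpl.
case=> -[Q1 Q2] /= [hQ1 hQ2] sub.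
have : nbhs_subspace y Q1 by [].
rewrite -(nbhs_subspace_in Ay) /within /prop_near1 /= => hQ1'.
exists ([set x | A x -> Q1 x], Q2); first by split.
move=> [x t] /= [h1 h2] [Ax It]; apply: (sub (x, t)) => //.
by split => //=; apply: h1.
Qed.

Lemma within_subP {T Z : topologicalType} (A : set T) (F : T * R -> Z) (g : T -> Z) :
  {within A `*` unitI, continuous F} ->
  continuous (from_subspace ((setT : set (subspace A)) `*` unitI)
    (fun q => if `[< A q.1 >] then F q else g q.1)).
Proof.
move=> /subspace_continuousP cF.
apply/subspace_continuousP => -[y r] [_ /= Ir] W.
rewrite /from_subspace /=.
case: (pselect (A y)) => Ay.
  rewrite asboolT // => hW.
  have := cF (y, r) (conj Ay Ir) W hW.
  rewrite !nbhs_simpl /= /within /prop_near1 /= !nbhs_simpl.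
  case=> -[Q1 Q2] /= [hQ1 hQ2] sub.
  exists (Q1 `&` A, Q2); first split => //=.
    have : within A (nbhs (y : T)) (Q1 `&` A).
      have hQ1' : nbhs (y : T) Q1 := hQ1.
      rewrite /within /prop_near1 /=; apply: filterS hQ1' => x ? ?; by split.
    rewrite (@nbhs_subspace_in T A y Ay); exact.
  move=> [x t] /= [[h1 h2] h3] [_ It].
  rewrite asboolT //; exact: (sub (x, t)).
rewrite asboolF // => hW.
exists ([set y], setT); first split => /=. 2: exact: (@filterT _ _ (@nbhs_filter R r)).
  have : globally [set y] [set y] by [].
  rewrite (@nbhs_subspace_out T A y Ay); exact.
move=> [x t] /= [-> _] _; rewrite asboolF //; exact: nbhs_singleton hW.
Qed.
Lemma unitIP (t : R) : unitI t <-> 0 <= t <= 1.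
Proof. rewrite /unitI /= in_itv /=. done. Qed.

Definition phi (a : R) : R := 1 - `|2 * a - 1|.
Definition cc (t : R) : R := Num.min 1 (Num.max 0 (3 * t - 1)).
Definition dd (t : R) : R := Num.min 1 (Num.min (3 * t) (3 - 3 * t)).
Definition qq (r a : R) : R := 1 - (1 - r) * phi a.

Lemma phi_lo (a : R) : 2 * a <= 1 -> 1 - phi a = 1 - 2 * a.
Proof. move=> h; rewrite /phi ler0_norm; lra. Qed.
Lemma phi_hi (a : R) : ~~ (2 * a <= 1) -> 1 - phi a = 2 * a - 1.
Proof. rewrite -ltNge => h; rewrite /phi ger0_norm; lra. Qed.
Lemma phi_I (a : R) : 0 <= a <= 1 -> 0 <= phi a <= 1.
Proof.
move=> /andP[h0 h1]; rewrite /phi.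
have [h|h] := lerP 0 (2 * a - 1); [rewrite ger0_norm // | rewrite ltr0_norm //]; apply/andP; split; lra.
Qed.
Lemma qq_I (r a : R) : 0 <= r <= 1 -> 0 <= a <= 1 -> 0 <= qq r a <= 1.
Proof.
move=> /andP[r0 r1] /phi_I /andP[p0 p1]; rewrite /qq; apply/andP; split; nra.
Qed.
Lemma mn (x y : R) : Num.min x y = if x <= y then x else y.
Proof. by rewrite minEle. Qed.
Lemma mx (x y : R) : Num.max x y = if x <= y then y else x.
Proof. by rewrite maxEle. Qed.
Lemma cc_I (t : R) : 0 <= cc t <= 1.
Proof.
rewrite /cc !(mn, mx); do ! case: ifP; move=> *; apply/andP; split; lra.
Qed.
Lemma dd_I (t : R) : 0 <= t <= 1 -> 0 <= dd t <= 1.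
Proof.
move=> /andP[t0 t1]; rewrite /dd !mn; do ! case: ifP; move=> *; apply/andP; split; lra.
Qed.
Lemma phi0 : phi 0 = 0.
Proof. by rewrite /phi mulr0 sub0r normrN normr1 subrr. Qed.
Lemma phi1 : phi 1 = 0.
Proof. rewrite /phi mulr1 ger0_norm; lra. Qed.
Lemma qq_path (t : R) : 0 <= t <= 1 -> qq (dd t) (cc t) = 1.
Proof.
move=> /andP[t0 t1]; rewrite /qq.
have [h1|h1] := lerP (3 * t) 1.
  have -> : cc t = 0 by rewrite /cc !(mn, mx); do ! case: ifP; move=> *; lra.
  by rewrite phi0 mulr0 subr0.
have [h2|h2] := lerP (3 * t) 2.
  have -> : dd t = 1 by rewrite /dd !mn; do ! case: ifP; move=> *; lra.
  by rewrite subrr mul0r subr0.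
have -> : cc t = 1 by rewrite /cc !(mn, mx); do ! case: ifP; move=> *; lra.
by rewrite phi1 mulr0 subr0.
Qed.
Lemma cc0 : cc 0 = 0.
Proof. rewrite /cc !(mn, mx); do ! case: ifP; move=> *; lra. Qed.
Lemma cc1 : cc 1 = 1.
Proof. rewrite /cc !(mn, mx); do ! case: ifP; move=> *; lra. Qed.
Lemma dd0 : dd 0 = 0.
Proof. rewrite /dd !mn; do ! case: ifP; move=> *; lra. Qed.
Lemma dd1 : dd 1 = 0.
Proof. rewrite /dd !mn; do ! case: ifP; move=> *; lra. Qed.
Section C.
Context {T : topologicalType}.
Lemma cD (f g : T -> R) : continuous f -> continuous g -> continuous (fun x => f x + g x).
Proof. move=> cf cg t; exact: (@cvgD R R^o T (nbhs t) _ f g _ _ (cf t) (cg t)). Qed.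
Lemma cM (f g : T -> R) : continuous f -> continuous g -> continuous (fun x => f x * g x).
Proof. move=> cf cg t; exact: (@cvgM R T (nbhs t) _ f g _ _ (cf t) (cg t)). Qed.
Lemma cN (f : T -> R) : continuous f -> continuous (fun x => - f x).
Proof. move=> cf t; exact: (@cvgN R R^o T (nbhs t) _ f _ (cf t)). Qed.
Lemma cB (f g : T -> R) : continuous f -> continuous g -> continuous (fun x => f x - g x).
Proof. by move=> cf cg; apply: cD => //; apply: cN. Qed.
Lemma cA (f : T -> R) : continuous f -> continuous (fun x => `|f x|).
Proof. move=> cf t; exact: (@cvg_norm R R^o T (nbhs t) _ f _ (cf t)). Qed.
Lemma cC (c : R) : continuous (fun _ : T => c).
Proof. exact: cst_continuous. Qed.
Lemma cMin (f g : T -> R) : continuous f -> continuous g -> continuous (fun x => Num.min (f x) (g x)).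
Proof. move=> cf cg t; exact: (@continuous_min R T f g t (cf t) (cg t)). Qed.
Lemma cMax (f g : T -> R) : continuous f -> continuous g -> continuous (fun x => Num.max (f x) (g x)).
Proof. move=> cf cg t; exact: (@continuous_max R T f g t (cf t) (cg t)). Qed.
End C.
Lemma cId : continuous (fun x : R => x).
Proof. by move=> t; exact: cvg_id. Qed.

Section C2.
Context {T U V : topologicalType}.
Lemma cIdT : continuous (fun x : T => x).
Proof. by move=> t; exact: cvg_id. Qed.
Lemma cPair (f : T -> U) (g : T -> V) : continuous f -> continuous g ->
  continuous (fun x => (f x, g x)).
Proof. by move=> cf cg t; apply: cvg_pair; [exact: cf | exact: cg]. Qed.
Lemma cFst (f : T -> U * V) : continuous f -> continuous (fun x => (f x).1).
Proof. by move=> cf t; apply: continuous_comp; [exact: cf | exact: cvg_fst]. Qed.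
Lemma cSnd (f : T -> U * V) : continuous f -> continuous (fun x => (f x).2).
Proof. by move=> cf t; apply: continuous_comp; [exact: cf | exact: cvg_snd]. Qed.
End C2.

Ltac cts := repeat first [ apply: cC | apply: cIdT | apply: cPair | apply: cD | apply: cM
  | apply: cN | apply: cA | apply: cMin | apply: cMax | apply: cFst | apply: cSnd ].

Lemma cts_test {X : topologicalType} :
  continuous (fun q : (X * R) * R => (q.1.1, qq q.2 q.1.2)).
Proof. rewrite /qq /phi; cts. Qed.
Lemma cts_test2 {X : topologicalType} :
  continuous (fun p : X * R => ((p.1, cc p.2), dd p.2)).
Proof. rewrite /cc /dd; cts. Qed.

Lemma IZR0 : Rdefinitions.IZR BinNums.Z0 = 0 :> R. Proof. by []. Qed.
Lemma IZR1 : Rdefinitions.IZR (BinNums.Zpos 1%AC) = 1 :> R. Proof. by []. Qed.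

Lemma dirA (X B : topologicalType) (pX : X -> B) (sX : B -> X) (U : set X) :
  continuous pX -> fw_homotopic_on pX U id (sX \o pX) ->
  exists s : X -> B, {within U, continuous s} /\
    exists H : X * R -> X, homotopy_on U (sX \o s) id H.
Proof.
move=> cp [H [[cH Hend] _]]; exists pX; split; first exact: continuous_subspaceT.
exists (H \o (fun p => (p.1, 1 - p.2))); split.
  apply: (within_comp (B := U `*` unitI)) => //.
    move=> [x t] [/= Ux /unitIP /andP[t0 t1]]; split => //=; apply/unitIP.
    apply/andP; split; lra.
  by apply: continuous_subspaceT; cts.
move=> u Uu; have [h0 h1] := Hend u Uu; split => /=.
  by rewrite IZR0 subr0; rewrite IZR1 in h1.
by rewrite IZR1 subrr; rewrite IZR0 in h0.
Qed.

Lemma within_post {S T Z : topologicalType} (A : set S) (g : S -> T) (f : T -> Z) :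
  {within A, continuous g} -> continuous f -> {within A, continuous (f \o g)}.
Proof.
move=> cg cf; apply: (within_comp (B := setT)) => //.
exact: continuous_subspaceT.
Qed.

Lemma dirB (X B : topologicalType) (pX : X -> B) (sX : B -> X) (U : set X) :
  pointed_fibrant pX sX ->
  (exists s : X -> B, {within U, continuous s} /\
    exists H : X * R -> X, homotopy_on U (sX \o s) id H) ->
  fw_homotopic_on pX U id (sX \o pX).
Proof.
case=> cp [cs [ps hf]] [s [_ [H [cH Hend]]]].
have He0 : forall u, U u -> H (u, 0) = sX (s u).
  by move=> u Uu; have [h0 _] := Hend u Uu; rewrite IZR0 in h0.
have He1 : forall u, U u -> H (u, 1) = u.
  by move=> u Uu; have [_ h1] := Hend u Uu; rewrite IZR1 in h1.
pose A : set (X * R) := U `*` unitI.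
pose K := fun p : X * R => if 2 * p.2 <= 1 then H (p.1, 1 - 2 * p.2)
                           else sX (pX (H (p.1, 2 * p.2 - 1))).
have c2 : continuous (fun p : X * R => 2 * p.2) by cts.
have cK : {within A, continuous K}.
  apply: (@within_paste _ _ A [set p : X * R | 2 * p.2 <= 1] [set p : X * R | 1 <= 2 * p.2] K).
  - have h := @closed_le R 1.
    exact: (proj1 (continuous_closedP (fun p : X * R => 2 * p.2)) c2 [set x | x <= 1] h).
  - have h := @closed_ge R 1.
    exact: (proj1 (continuous_closedP (fun p : X * R => 2 * p.2)) c2 [set x | 1 <= x] h).
  - move=> p _; case: (lerP (2 * p.2) 1) => h; [left|right] => //=.
    exact: ltW.
  - apply: (@subspace_eq_continuous _ _ _ (from_subspace _ (H \o (fun p => (p.1, 1 - 2 * p.2))))).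
      move=> p; rewrite inE => -[_ /= h]; by rewrite /K /from_subspace /= h.
    apply: (@within_comp _ _ _ _ (U `*` unitI)).  
      move=> [x t] [[/= Ux /unitIP /andP[t0 t1]] /= h]; split => //=; apply/unitIP.
      apply/andP; split; lra.
      by apply: continuous_subspaceT; cts.
    exact: cH.
  - apply: (@subspace_eq_continuous _ _ _
      (from_subspace _ ((sX \o pX \o H) \o (fun p => (p.1, 2 * p.2 - 1))))).
      move=> p; rewrite inE => -[[/= Up _] /= h]; rewrite /K /from_subspace /=.
      case: ifP => // h'.
      have e1 : 1 - 2 * p.2 = 0 by lra.
      have e2 : 2 * p.2 - 1 = 0 by lra.
      by rewrite e1 e2 He0 // ps.
    apply: (@within_comp _ _ _ _ (U `*` unitI)).
      move=> [x t] [[/= Ux /unitIP /andP[t0 t1]] /= h]; split => //=; apply/unitIP.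
      apply/andP; split; lra.
      by apply: continuous_subspaceT; cts.
    apply: within_post => //.
    move=> x; apply: continuous_comp; [exact: cp | exact: cs].
pose F := fun q : (X * R) * R => pX (H (q.1.1, qq q.2 q.1.2)).
pose G := fun q : subspace A * R => if `[< A q.1 >] then F q else pX (K q.1).
have cG : continuous (from_subspace ((setT : set (subspace A)) `*` unitI) G).
  apply: (@within_subP _ _ A F (fun y => pX (K y))).
  apply: (within_post (g := H \o (fun q : (X * R) * R => (q.1.1, qq q.2 q.1.2)))) => //.
  apply: (within_comp (B := U `*` unitI)) => //.
    move=> [[x a] r] [[/= Ux /unitIP Ia] /= /unitIP Ir]; split => //=; apply/unitIP.
    exact: qq_I.
  by apply: continuous_subspaceT; rewrite /qq /phi; cts.
have G0 : forall y, G (y, 0) = pX (K y).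
  move=> [x a]; rewrite /G /=; case: asboolP => // _.
  rewrite /F /K /qq /= subr0 mul1r.
  case: ifP => h; first by rewrite phi_lo.
  by rewrite ps phi_hi // h.
have [Ht [cHt [Ht0 Htp]]] := hf (subspace A) K G cK cG G0.
exists (fun p : X * R => Ht ((p.1, cc p.2), dd p.2)); split; first split.
- apply: (within_comp (B := A `*` unitI) (g := fun p : X * R => ((p.1, cc p.2), dd p.2))
    (f := Ht)).
  + move=> [x t] [/= Ux /unitIP It]; split; first split => //=.
      by apply/unitIP; exact: cc_I.
    by apply/unitIP; exact: dd_I.
  + by apply: continuous_subspaceT; rewrite /cc /dd; cts.
  + exact: (subP_within cHt).
- move=> u Uu; split => /=.
    rewrite IZR0 cc0 dd0.
    have := Ht0 (u, 0); rewrite IZR0 => ->.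
    by rewrite /K /= mulr0 ler01 subr0 He1.
  rewrite IZR1 cc1 dd1.
  have := Ht0 (u, 1); rewrite IZR0 => ->.
  rewrite /K /= mulr1.
  have -> : (2 <= 1 :> R) = false by apply/negbTE; rewrite -ltNge; lra.
  have -> : (2 - 1 = 1 :> R) by lra.
  by rewrite He1.
- move=> u t Uu It.
  have It' := It; move/unitIP: It' => It'.
  rewrite /= Htp; last by apply/unitIP; exact: dd_I.
  rewrite /G asboolT; last first.
    by split => //=; apply/unitIP; exact: cc_I.
  by rewrite /F /= qq_path // He1.
Qed.

Theorem corollary2p10 (B X : topologicalType) (pX : X -> B) (sX : B -> X) :
  pointed_fibrant pX sX -> catB pX sX = secat sX.
Proof.
move=> hpf; rewrite /catB /secat; congr least_or_inf.
apply: funext => n; apply: propext; rewrite /open_cover_by.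
split => -[U [oU [PU cov]]]; exists U; split => //; split => // i.
  exact: dirA (proj1 hpf) (PU i).
exact: dirB hpf (PU i).
Qed.
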